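(* Let $D\ge1$ and let $\hat{\vec{\mathcal{D}}}_\Theta\in\mathbb{C}^D$, $\Theta=1,\dots,n_q$, be vectors not all zero. For each $\Theta$ let $\hat{\t{e}}_\Theta\in\mathbb{C}^{D\times D}$ be symmetric ($\hat e_{\Theta,ij}=\hat e_{\Theta,ji}$). Define $$\hat{\vec{\mathcal{D}}}^{-1}_\Theta=\frac{\hat{\vec{\mathcal{D}}}^*_\Theta}{\sum_\Lambda\hat{\vec{\mathcal{D}}}_\Lambda\cdot\hat{\vec{\mathcal{D}}}^*_\Lambda},\qquad \hat{\t{g}}_{\Theta\Lambda}=\hat{\vec{\mathcal{D}}}_\Theta\otimes\hat{\vec{\mathcal{D}}}^{-1}_\Lambda,$$ and for $\hat{\vec u}\in\mathbb{C}^D$ the residual $\mathcal{R}(\hat{\vec u})=\sum_\Theta \sum_{i,j}\left|R_{\Theta,ij}\right|^2$ with $\t{R}_\Theta=\frac12\left(\hat{\vec{\mathcal{D}}}_\Theta\otimes\hat{\vec u}+\hat{\vec u}\otimes\hat{\vec{\mathcal{D}}}_\Theta\right)-\hat{\t{e}}_\Theta$. Then $\t{1}+\sum_\Theta\hat{\t{g}}_{\Theta\Theta}$ is invertible; set $\hat{\t{h}}=\left(\t{1}+\sum_\Theta\hat{\t{g}}_{\Theta\Theta}\right)^{-1}$. The residual $\mathcal{R}$ has a unique minimizer $\hat{\vec u}$, characterized by $$\left(\t{1}+\sum_\Theta\hat{\t{g}}_{\Theta\Theta}\right)\cdot\hat{\vec u}=\sum_\Theta\left(\hat{\vec{\mathcal{D}}}^{-1}_\Theta\cdot\hat{\t{e}}_\Theta+\hat{\t{e}}_\Theta\cdot\hat{\vec{\mathcal{D}}}^{-1}_\Theta\right),$$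 i.e. $\hat u_i=\sum_\Theta\sum_{l,m}\left(\hat{\mathcal{D}}^{-1}_{\Theta,l}\hat h_{im}+\hat h_{il}\hat{\mathcal{D}}^{-1}_{\Theta,m}\right)\hat e_{\Theta,lm}$. Furthermore the symmetrized gradients of this minimizer, $\hat e'_{\Theta,ij}=\frac12\left(\hat{\mathcal{D}}_{\Theta,i}\hat u_j+\hat u_i\hat{\mathcal{D}}_{\Theta,j}\right)$, are given by $\hat e'_{\Theta,ij}=\sum_\Lambda\sum_{l,m}\hat G_{\Theta\Lambda,ijlm}\hat e_{\Lambda,lm}$ with $$\hat G_{\Theta\Lambda,ijlm}=\frac12\left(\hat g_{\Theta\Lambda,il}\hat h_{jm}+\hat g_{\Theta\Lambda,im}\hat h_{jl}+\hat g_{\Theta\Lambda,jl}\hat h_{im}+\hat g_{\Theta\Lambda,jm}\hat h_{il}\right).$$ Finally, in the single-element case $n_q=1$ one has $\hat{\t{h}}=\t{1}-\frac12\hat{\t{g}}_{11}$.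
   Context: Small-strain compatibility projection at a fixed nonzero wavevector: $\hat{\vec{\mathcal{D}}}_\Theta$ is the Fourier symbol of the (possibly discrete) gradient operator evaluated in element (evaluation point) $\Theta$ of a voxel, $\hat{\t{e}}_\Theta$ the Fourier coefficient of the strain tensor in element $\Theta$, and $\hat{\vec u}$ the Fourier coefficient of the displacement. $\otimes$ is the outer product, $\vec a\cdot\t{B}$ and $\t{B}\cdot\vec a$ denote vector–matrix contractions, $\t{1}$ the identity matrix, and the star complex conjugation. *)

(* Defs.v *)
(* The complex field is modelled by an arbitrary
   numClosedFieldType C (e.g. algC, or complex R for R : rcfType),
   with conjugation x^* and modulus `|x|. *)
From HB Require Import structures.
From mathcomp Require Import all_boot all_order all_algebra.
Set Implicit Arguments. Unset Strict Implicit. Unset Printing Implicit Defensive.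
Import Order.TTheory GRing.Theory Num.Theory.
Local Open Scope ring_scope.

Section Defs.
Variables (C : numClosedFieldType) (nq d : nat).
(* Dv T = Fourier symbol \hat{\mathcal D}_T of the gradient in element T *)
Variable Dv : 'I_nq -> 'I_d -> C.

Definition Dnorm2 : C := \sum_(L < nq) \sum_(i < d) Dv L i * (Dv L i)^*.

Definition Dinv (T : 'I_nq) (i : 'I_d) : C := (Dv T i)^* / Dnorm2.

Definition gmx (T L : 'I_nq) : 'M[C]_d := \matrix_(i, j) (Dv T i * Dinv L j).

Definition Mmx : 'M[C]_d := 1%:M + \sum_(T < nq) gmx T T.

Definition hmx : 'M[C]_d := invmx Mmx.

Variable e : 'I_nq -> 'M[C]_d.

Definition Rmx (u : 'cV[C]_d) (T : 'I_nq) : 'M[C]_d :=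
  \matrix_(i, j) ((Dv T i * u j ord0 + u i ord0 * Dv T j) / 2%:R - e T i j).

Definition resid (u : 'cV[C]_d) : C :=
  \sum_(T < nq) \sum_(i < d) \sum_(j < d) `|Rmx u T i j| ^+ 2.

Definition is_minimizer (u : 'cV[C]_d) : Prop := forall v, resid u <= resid v.

Definition rhs : 'cV[C]_d :=
  \col_(i < d) \sum_(T < nq) \sum_(l < d)
     (Dinv T l * e T l i + e T i l * Dinv T l).

Definition Gcoef (T L : 'I_nq) (i j l m : 'I_d) : C :=
  (gmx T L i l * hmx j m + gmx T L i m * hmx j l
   + gmx T L j l * hmx i m + gmx T L j m * hmx i l) / 2%:R.
End Defs.

(* Main.v *)
Require Import Defs.
From HB Require Import structures.
From mathcomp Require Import all_boot all_order all_algebra.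
From mathcomp Require Import ring lra.
Import Order.TTheory GRing.Theory Num.Theory.
Local Open Scope ring_scope.

Section Helpers.
Set Implicit Arguments. Unset Strict Implicit.
Variables (C : numClosedFieldType) (nq d : nat).
Variable Dv : 'I_nq -> 'I_d -> C.

Notation n := (Dnorm2 Dv).

Lemma conjD' (x y : C) : (x + y)^* = x^* + y^*.
Proof. exact: rmorphD. Qed.
Lemma conjM' (x y : C) : (x * y)^* = x^* * y^*.
Proof. exact: rmorphM. Qed.

Lemma conj_half (x : C) : (x / 2%:R)^* = x^* / 2%:R.
Proof. by rewrite rmorphM fmorphV rmorph_nat. Qed.

Lemma cross (T : 'I_nq) (B : 'M[C]_d) (w : 'cV[C]_d) :
  (forall i j, B i j = B j i) ->
  \sum_(i < d) \sum_(j < d) B i j * ((Dv T i * w j ord0 + w i ord0 * Dv T j) / 2%:R)^*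
  = \sum_(j < d) (w j ord0)^* * \sum_(i < d) B j i * (Dv T i)^*.
Proof.
move=> Bs.
have -> : \sum_(i < d) \sum_(j < d) B i j * ((Dv T i * w j ord0 + w i ord0 * Dv T j) / 2%:R)^*
  = \sum_(i < d) \sum_(j < d) (B i j * (Dv T i)^* * (w j ord0)^* / 2%:R
      + B i j * (w i ord0)^* * (Dv T j)^* / 2%:R).
  apply: eq_bigr => i _; apply: eq_bigr => j _.
  by rewrite conj_half conjD' !conjM'; ring.
rewrite (eq_bigr _ (fun i _ => big_split _ _ _ _ _)) big_split /= exchange_big /=.
rewrite -big_split /=; apply: eq_bigr => j _.
rewrite mulr_sumr -big_split /=; apply: eq_bigr => i _.
by rewrite (Bs i j); field.
Qed.


Lemma Mmx_col (u : 'cV[C]_d) j :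
  (Mmx Dv *m u) j ord0 = u j ord0 + \sum_(T < nq) \sum_(k < d) Dv T j * Dinv Dv T k * u k ord0.
Proof.
rewrite /Mmx mulmxDl mul1mx mulmx_suml mxE summxE; congr (_ + _).
apply: eq_bigr => T _; rewrite mxE; apply: eq_bigr => k _; by rewrite mxE.
Qed.

Lemma colsum (e : 'I_nq -> 'M[C]_d) (es : forall T i j, e T i j = e T j i)
  (nz : n != 0) (u : 'cV[C]_d) j :
  \sum_(T < nq) \sum_(i < d) Rmx Dv e u T j i * (Dv T i)^*
  = n / 2%:R * ((Mmx Dv *m u) j ord0 - rhs Dv e j ord0).
Proof.
rewrite Mmx_col /rhs mxE mulrBr mulrDr.
have h1 : n / 2%:R * u j ord0 = \sum_(T < nq) \sum_(i < d) Dv T i * (Dv T i)^* * u j ord0 / 2%:R.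
  rewrite {1}/Dnorm2 !mulr_suml; apply: eq_bigr => T _; rewrite !mulr_suml.
  by apply: eq_bigr => i _; ring.
have h2 : n / 2%:R * (\sum_(T < nq) \sum_(k < d) Dv T j * Dinv Dv T k * u k ord0)
   = \sum_(T < nq) \sum_(k < d) Dv T j * (Dv T k)^* * u k ord0 / 2%:R.
  rewrite mulr_sumr; apply: eq_bigr => T _; rewrite mulr_sumr; apply: eq_bigr => k _.
  rewrite /Dinv; field; exact: nz.
have h3 : n / 2%:R * (\sum_(T < nq) \sum_(l < d) (Dinv Dv T l * e T l j + e T j l * Dinv Dv T l))
   = \sum_(T < nq) \sum_(l < d) e T j l * (Dv T l)^*.
  rewrite mulr_sumr; apply: eq_bigr => T _; rewrite mulr_sumr; apply: eq_bigr => k _.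
  rewrite /Dinv (es T k j); field; exact: nz.
rewrite h1 h2 h3 -big_split -sumrB /=; apply: eq_bigr => T _.
rewrite -big_split -sumrB /=; apply: eq_bigr => i _.
rewrite !mxE; by field.
Qed.

Definition Z : 'I_nq -> 'M[C]_d := fun _ => 0.

Lemma Rmx0E (w : 'cV[C]_d) T i j :
  Rmx Dv Z w T i j = (Dv T i * w j ord0 + w i ord0 * Dv T j) / 2%:R.
Proof. by rewrite !mxE subr0. Qed.

Lemma Rsym (e : 'I_nq -> 'M[C]_d) (es : forall T i j, e T i j = e T j i) u T i j :
  Rmx Dv e u T i j = Rmx Dv e u T j i.
Proof. rewrite !mxE es; congr (_ - _); congr (_ / _); ring. Qed.

Lemma key (e : 'I_nq -> 'M[C]_d) (es : forall T i j, e T i j = e T j i)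
  (nz : n != 0) (u w : 'cV[C]_d) :
  \sum_(T < nq) \sum_(i < d) \sum_(j < d) Rmx Dv e u T i j * (Rmx Dv Z w T i j)^*
  = \sum_(j < d) (w j ord0)^* * (n / 2%:R * ((Mmx Dv *m u) j ord0 - rhs Dv e j ord0)).
Proof.
have E : forall T, \sum_(i < d) \sum_(j < d) Rmx Dv e u T i j * (Rmx Dv Z w T i j)^*
   = \sum_(j < d) (w j ord0)^* * \sum_(i < d) Rmx Dv e u T j i * (Dv T i)^*.
  move=> T; rewrite -(@cross T (Rmx Dv e u T) w); last exact: Rsym.
  by apply: eq_bigr => i _; apply: eq_bigr => j _; rewrite Rmx0E.
rewrite (eq_bigr _ (fun T _ => E T)) exchange_big /=.
apply: eq_bigr => j _; by rewrite -mulr_sumr colsum.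
Qed.

Lemma Zsym : forall T i j, Z T i j = Z T j i.
Proof. by move=> T i j; rewrite /Z !mxE. Qed.

Lemma rhsZ j : rhs Dv Z j ord0 = 0.
Proof.
rewrite mxE big1 // => T _; rewrite big1 // => l _; by rewrite /Z !mxE mulr0 mul0r addr0.
Qed.

Lemma Q_form (nz : n != 0) (w : 'cV[C]_d) :
  resid Dv Z w = \sum_(j < d) (w j ord0)^* * (n / 2%:R * (Mmx Dv *m w) j ord0).
Proof.
transitivity (\sum_(j < d) (w j ord0)^* * (n / 2%:R * ((Mmx Dv *m w) j ord0 - rhs Dv Z j ord0))).
  rewrite -key //; last exact: Zsym.
  apply: eq_bigr => T _; apply: eq_bigr => i _; apply: eq_bigr => j _.
  by rewrite normCK.
by apply: eq_bigr => j _; rewrite rhsZ subr0.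
Qed.

Lemma resid_ge0 (e : 'I_nq -> 'M[C]_d) u : 0 <= resid Dv e u.
Proof.
apply: sumr_ge0 => T _; apply: sumr_ge0 => i _; apply: sumr_ge0 => j _.
by rewrite exprn_ge0.
Qed.

Lemma Q_eq0 (hD : exists T i, Dv T i != 0) (w : 'cV[C]_d) :
  resid Dv Z w = 0 -> w = 0.
Proof.
move=> H; case: hD => T [k Dk].
have S0 : forall i j, Dv T i * w j ord0 + w i ord0 * Dv T j = 0.
  move=> i j.
  have n3 : forall T i j, 0 <= `|Rmx Dv Z w T i j| ^+ 2 by move=> *; rewrite exprn_ge0.
  have n2 : forall T i, 0 <= \sum_(j < d) `|Rmx Dv Z w T i j| ^+ 2.
    by move=> *; apply: sumr_ge0 => *; apply: n3.
  have n1 : forall T, 0 <= \sum_(i < d) \sum_(j < d) `|Rmx Dv Z w T i j| ^+ 2.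
    by move=> *; apply: sumr_ge0 => *; apply: n2.
  have H1 := psumr_eq0P (fun T _ => n1 T) H (i:=T) isT.
  have H2 := psumr_eq0P (fun i _ => n2 T i) H1 (i:=i) isT.
  have H3 := psumr_eq0P (fun j _ => n3 T i j) H2 (i:=j) isT.
  move: H3; rewrite Rmx0E => /eqP; rewrite sqrf_eq0 normr_eq0 mulf_eq0 invr_eq0 pnatr_eq0 orbF.
  by move/eqP.
have wk : w k ord0 = 0.
  have := S0 k k; rewrite [w k ord0 * _]mulrC -mulr2n -mulr_natr => /eqP.
  rewrite !mulf_eq0 pnatr_eq0 (negbTE Dk) /= orbF.
  by move/eqP.
apply/matrixP => j c; rewrite (ord1 c) mxE.
have := S0 k j; rewrite wk mul0r addr0 => /eqP; rewrite mulf_eq0 (negbTE Dk) /=.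
by move/eqP.
Qed.

Lemma nz_n (hD : exists T i, Dv T i != 0) : n != 0.
Proof.
case: hD => T [k Dk]; apply/eqP => H.
have n2 : forall T i, 0 <= Dv T i * (Dv T i)^* by move=> *; exact: mul_conjC_ge0.
have n1 : forall T, 0 <= \sum_(i < d) Dv T i * (Dv T i)^*.
  by move=> *; apply: sumr_ge0 => *; apply: n2.
have H1 := psumr_eq0P (fun T _ => n1 T) H (i:=T) isT.
have H2 := psumr_eq0P (fun i _ => n2 T i) H1 (i:=k) isT.
by move: H2 => /eqP; rewrite mul_conjC_eq0 (negbTE Dk).
Qed.

Lemma expand (e : 'I_nq -> 'M[C]_d) (es : forall T i j, e T i j = e T j i)
  (nz : n != 0) (u : 'cV[C]_d) (Hu : Mmx Dv *m u = rhs Dv e) (w : 'cV[C]_d) :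
  resid Dv e (u + w) = resid Dv e u + resid Dv Z w.
Proof.
have X0 : \sum_(T < nq) \sum_(i < d) \sum_(j < d) Rmx Dv e u T i j * (Rmx Dv Z w T i j)^* = 0.
  rewrite key // big1 // => j _; by rewrite Hu subrr !mulr0.
have X1 : \sum_(T < nq) \sum_(i < d) \sum_(j < d) (Rmx Dv e u T i j * (Rmx Dv Z w T i j)^*)^* = 0.
  transitivity ((\sum_(T < nq) \sum_(i < d) \sum_(j < d) Rmx Dv e u T i j * (Rmx Dv Z w T i j)^*)^*);
    last by rewrite X0 conjC0.
  rewrite rmorph_sum; apply: eq_bigr => T _; rewrite rmorph_sum.
  by apply: eq_bigr => i _; rewrite rmorph_sum.
have P : forall T i j, `|Rmx Dv e (u + w) T i j| ^+ 2 =
   (`|Rmx Dv e u T i j| ^+ 2 + `|Rmx Dv Z w T i j| ^+ 2)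
   + (Rmx Dv e u T i j * (Rmx Dv Z w T i j)^* + (Rmx Dv e u T i j * (Rmx Dv Z w T i j)^*)^*).
  move=> T i j.
  have -> : Rmx Dv e (u + w) T i j = Rmx Dv e u T i j + Rmx Dv Z w T i j.
    rewrite Rmx0E !mxE; ring.
  by rewrite !normCK conjD' conjM' conjCK; ring.
rewrite /resid (eq_bigr _ (fun T _ => eq_bigr _ (fun i _ => eq_bigr _ (fun j _ => P T i j)))).
under eq_bigr => T _ do under eq_bigr => i _ do rewrite !big_split /=.
under eq_bigr => T _ do rewrite !big_split /=.
rewrite !big_split /= X0 X1 !addr0.
by [].
Qed.

Lemma unitM (hD : exists T i, Dv T i != 0) : Mmx Dv \in unitmx.
Proof.
rewrite unitmxE unitfE -det_tr; apply/negP => /det0P [v vnz H].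
have Mv : Mmx Dv *m v^T = 0 by rewrite -[Mmx Dv]trmxK -trmx_mul H trmx0.
have : resid Dv Z v^T = 0.
  rewrite Q_form; last exact: nz_n.
  by rewrite big1 // => j _; rewrite Mv !mxE !mulr0.
move/(Q_eq0 hD) => /eqP; rewrite -trmx0 (inj_eq (@trmx_inj _ _ _)).
by rewrite (negbTE vnz).
Qed.

End Helpers.

Theorem mainTheorem6 (C : numClosedFieldType) (d nq : nat)
    (Dv : 'I_nq -> 'I_d -> C) (e : 'I_nq -> 'M[C]_d) :
  (0 < d)%N ->
  (exists T i, Dv T i != 0) ->
  (forall T i j, e T i j = e T j i) ->
  [/\ Mmx Dv \in unitmx,
      exists! u : 'cV[C]_d, is_minimizer Dv e u,
      forall u : 'cV[C]_d, is_minimizer Dv e u <-> Mmx Dv *m u = rhs Dv e,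
      forall u : 'cV[C]_d, is_minimizer Dv e u ->
        (forall i : 'I_d, u i ord0 =
           \sum_(T < nq) \sum_(l < d) \sum_(m < d)
             (Dinv Dv T l * hmx Dv i m + hmx Dv i l * Dinv Dv T m) * e T l m)
        /\ (forall (T : 'I_nq) (i j : 'I_d),
             (Dv T i * u j ord0 + u i ord0 * Dv T j) / 2%:R =
             \sum_(L < nq) \sum_(l < d) \sum_(m < d) Gcoef Dv T L i j l m * e L l m)
    & nq = 1%N -> forall T : 'I_nq,
        hmx Dv = 1%:M - 2%:R^-1 *: gmx Dv T T].
Proof.
move=> d0 hD es.
have nz := nz_n hD.
have U := unitM hD.
set u0 := hmx Dv *m rhs Dv e.
have Hu0 : Mmx Dv *m u0 = rhs Dv e by rewrite /u0 /hmx mulmxA mulmxV // mul1mx.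
have resv : forall v, resid Dv e v = resid Dv e u0 + resid Dv (@Z _ _ _) (v - u0).
  by move=> v; rewrite -expand // addrC subrK.
have minP : forall v, is_minimizer Dv e v <-> v = u0.
  move=> v; split.
  - move=> Hv; have := Hv u0; rewrite (resv v) gerDl => Hle.
    have Q0 : resid Dv (@Z _ _ _) (v - u0) = 0 by apply/eqP; rewrite eq_le Hle resid_ge0.
    by move/(Q_eq0 hD): Q0 => /eqP; rewrite subr_eq0 => /eqP.
  - by move=> -> w; rewrite (resv w) lerDl resid_ge0.
have eqM : forall v, Mmx Dv *m v = rhs Dv e <-> v = u0.
  move=> v; split => [H|->//]; by rewrite /u0 -H /hmx mulKmx.
have ha : forall i : 'I_d, u0 i ord0 =
           \sum_(T < nq) \sum_(l < d) \sum_(m < d)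
             (Dinv Dv T l * hmx Dv i m + hmx Dv i l * Dinv Dv T m) * e T l m.
  move=> i; rewrite /u0 mxE.
  under eq_bigr => m _ do rewrite mxE mulr_sumr.
  rewrite exchange_big /=; apply: eq_bigr => T _.
  transitivity (\sum_(m < d) \sum_(l < d) (Dinv Dv T l * hmx Dv i m * e T l m
        + hmx Dv i m * Dinv Dv T l * e T m l)).
    by apply: eq_bigr => m _; rewrite mulr_sumr; apply: eq_bigr => l _; ring.
  rewrite (eq_bigr _ (fun m _ => big_split _ _ _ _ _)) big_split /= exchange_big /=.
  rewrite [RHS](eq_bigr (fun l => \sum_(m < d) (Dinv Dv T l * hmx Dv i m * e T l m
       + hmx Dv i l * Dinv Dv T m * e T l m))); last first.
    by move=> l _; apply: eq_bigr => m _; ring.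
  rewrite [RHS](eq_bigr _ (fun l _ => big_split _ _ _ _ _)) big_split /=.
  congr (_ + _); apply: eq_bigr => a _; apply: eq_bigr => b _; ring.
split.
- exact: U.
- exists u0; split; first exact/minP.
  by move=> v /minP ->.
- by move=> v; rewrite minP eqM.
- move=> v /minP ->; split; first exact: ha.
  move=> T i j; rewrite !ha.
  rewrite mulr_sumr mulr_suml -big_split /= mulr_suml; apply: eq_bigr => L _.
  rewrite mulr_sumr mulr_suml -big_split /= mulr_suml; apply: eq_bigr => l _.
  rewrite mulr_sumr mulr_suml -big_split /= mulr_suml; apply: eq_bigr => m _.
  rewrite /Gcoef !mxE; ring.
- move=> H1; subst nq => T.
  have {T}-> : T = ord0 := ord1 T.
  have nE : Dnorm2 Dv = \sum_(k < d) Dv ord0 k * (Dv ord0 k)^* by rewrite /Dnorm2 big_ord1.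
  have s1 : \sum_(k < d) Dinv Dv ord0 k * Dv ord0 k = 1.
    transitivity ((\sum_(k < d) Dv ord0 k * (Dv ord0 k)^*) / Dnorm2 Dv).
      by rewrite mulr_suml; apply: eq_bigr => k _; rewrite /Dinv; ring.
    by rewrite -nE divff.
  have gg : gmx Dv ord0 ord0 *m gmx Dv ord0 ord0 = gmx Dv ord0 ord0.
    apply/matrixP => i j; rewrite !mxE.
    transitivity (Dv ord0 i * Dinv Dv ord0 j * \sum_(k < d) Dinv Dv ord0 k * Dv ord0 k).
      by rewrite mulr_sumr; apply: eq_bigr => k _; rewrite !mxE; ring.
    by rewrite s1 mulr1.
  have MB : Mmx Dv *m (1%:M - 2%:R^-1 *: gmx Dv ord0 ord0) = 1%:M.
    rewrite /Mmx big_ord1 mulmxDl mul1mx mulmxBr mulmx1 -scalemxAr gg.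
    apply/matrixP => i j; rewrite !mxE; move: ((i == j)%:R) => b; by field.
  by rewrite /hmx -[LHS]mulmx1 -{1}MB mulKmx.
Qed.
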